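(* For every $r\ge3$ and every pair $\{P,Q\}$ of $r$-patterns forming a mismatch, there exists $1\le j\le r$ such that $\{P^{-j},Q^{-j}\}$ is also a mismatch.
   Context: An $r$-pattern is an ordered $r$-matching of size 2, written as a word over $\{A,B\}$ in which each letter appears $r$ times and which begins with $A$. For an $r$-pattern $P$ and $1\le j\le r$, $P^{-j}$ is the $(r-1)$-pattern obtained from $P$ by deleting the $j$-th occurrence of $A$ and the $j$-th occurrence of $B$ (e.g., for $P=AABBBABA$, $P^{-1}=P^{-2}=ABBABA$ and $P^{-3}=AABBBA$). An $r$-pattern $P$ is collectable if it can be split into consecutive blocks $P=S_1\cdots S_s$ each of the form $A^tB^t$ or $B^tA^t$ ($t\ge1$); this splitting is unique and $\lambda_P=(|S_1|/2,\dots,|S_s|/2)$ is the composition of $P$. A pair $\{P,Q\}$ of $r$-patterns is a mismatch if exactly one of $P,Q$ is collectable, or both are collectable and $\lambda_P\neq\lambda_Q$. *)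

(* Defs.v *)
From mathcomp Require Import all_boot.
Set Implicit Arguments. Unset Strict Implicit. Unset Printing Implicit Defensive.

(* A word over {A,B} is a seq bool: true = A, false = B. *)
Definition is_pattern (r : nat) (P : seq bool) : Prop :=
  [/\ size P = (2 * r)%N, count id P = r & head false P = true].

(* remove the j-th (1-indexed) occurrence of letter a in w *)
Fixpoint del_occ (a : bool) (j : nat) (w : seq bool) : seq bool :=
  match w with
  | [::] => [::]
  | x :: w' => if x == a then (if j == 1 then w' else x :: del_occ a j.-1 w')
               else x :: del_occ a j w'
  end.

(* P^{-j}: delete the j-th A and the j-th B *)
Definition pdel (j : nat) (P : seq bool) : seq bool :=
  del_occ false j (del_occ true j P).

Definition block (b : bool) (t : nat) : seq bool := nseq t b ++ nseq t (~~ b).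

Definition decomp (P : seq bool) (lam : seq nat) : Prop :=
  exists bs : seq (bool * nat),
    [/\ all (fun bt => 0 < bt.2) bs,
        flatten [seq block bt.1 bt.2 | bt <- bs] = P
      & [seq bt.2 | bt <- bs] = lam].

Definition collectable (P : seq bool) : Prop := exists lam, decomp P lam.

Definition mismatch (P Q : seq bool) : Prop :=
  (collectable P /\ ~ collectable Q) \/ (~ collectable P /\ collectable Q) \/
  (collectable P /\ collectable Q /\
     forall lP lQ, decomp P lP -> decomp Q lQ -> lP <> lQ).

(* Main.v *)
Require Import Defs.
From mathcomp Require Import all_boot zify.
From Stdlib Require Import Classical.
Set Implicit Arguments. Unset Strict Implicit. Unset Printing Implicit Defensive.

Definition cnt (a : bool) (w : seq bool) := count (pred1 a) w.

Arguments cnt : simpl never.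

Lemma cnt_cons a x w : cnt a (x :: w) = (x == a) + cnt a w.
Proof. by []. Qed.

Lemma cnt_cat a u v : cnt a (u ++ v) = cnt a u + cnt a v.
Proof. by rewrite /cnt count_cat. Qed.

Lemma cnt_tf w : cnt true w + cnt false w = size w.
Proof. elim: w => //= x w IH; rewrite !cnt_cons; case: x IH => /=; lia. Qed.

Lemma cnt_nseq a n x : cnt a (nseq n x) = (x == a) * n.
Proof. by rewrite /cnt count_nseq. Qed.

Lemma del0 a w : del_occ a 0 w = w.
Proof. elim: w => //= x w ->; by case: (x == a). Qed.

Lemma del_big a j w : cnt a w < j -> del_occ a j w = w.
Proof.
elim: w j => //= x w IH j; rewrite cnt_cons.
case: eqP => [_|_] /= H.
  have -> : (j == 1) = false by apply/eqP; lia.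
  by rewrite IH //; lia.
by rewrite IH.
Qed.

Lemma del_cat a j u v :
  del_occ a j (u ++ v) =
  if j <= cnt a u then del_occ a j u ++ v else u ++ del_occ a (j - cnt a u) v.
Proof.
elim: u j => [|x u IH] j /=.
  by case: j => [|j]; rewrite /cnt /= ?del0 ?subn0.
rewrite cnt_cons; case: eqP => [_|_] /=.
  case: eqP => [->|Hj] /=; first by [].
  rewrite IH.
  case: j Hj => [|j] Hj /=; first by [].
  have -> : (j < 1 + cnt a u) = (j <= cnt a u) by lia.
  case: ifP => _ //; do 2 congr (_ :: _); congr (u ++ _); congr del_occ; lia.
by rewrite IH add0n; case: ifP.
Qed.

Ltac ifs := repeat match goal with |- context [if ?b then _ else _] => case: (boolP b) => ? end; try lia.

Lemma cnt_del_same a j w :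
  cnt a (del_occ a j w) = if (0 < j) && (j <= cnt a w) then (cnt a w).-1 else cnt a w.
Proof.
elim: w j => [|x w IH] j /=; first by rewrite /cnt /=; ifs.
case: (x =P a) => [->|Hx].
  case: (j =P 1) => [->|Hj] /=; first by rewrite cnt_cons eqxx; ifs.
  rewrite !cnt_cons eqxx IH; ifs.
move: Hx; case: x; case: a IH => IH //= _; rewrite !cnt_cons IH /=; ifs.
Qed.

Lemma cnt_del_other a b j w : b != a -> cnt b (del_occ a j w) = cnt b w.
Proof.
move=> Hba; elim: w j => [|x w IH] j //=.
move: Hba IH; case: a; case: b => //= _ IH; case: x => /=;
  try case: (j == 1); rewrite ?cnt_cons ?IH //.
Qed.

Lemma cnt_block c b t : cnt c (block b t) = t.
Proof. rewrite /block cnt_cat !cnt_nseq; case: b; case: c => /=; lia. Qed.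

Lemma cat_cancel (T : eqType) (u X Y : seq T) : u ++ X = u ++ Y -> X = Y.
Proof. by elim: u => //= x u IH [] /IH. Qed.

Lemma pdel_catl j u v : j <= cnt true u -> j <= cnt false u ->
  pdel j (u ++ v) = pdel j u ++ v.
Proof.
move=> H1 H2; rewrite /pdel del_cat H1 del_cat cnt_del_other // H2 //.
Qed.

Lemma pdel_catr j u v : cnt true u < j -> cnt false u < j -> cnt true u = cnt false u ->
  pdel j (u ++ v) = u ++ pdel (j - cnt true u) v.
Proof.
move=> H1 H2 H3; rewrite /pdel del_cat.
have -> : (j <= cnt true u) = false by lia.
rewrite del_cat.
have -> : (j <= cnt false u) = false by lia.
by rewrite H3.
Qed.

Lemma del_nseq a j t : 0 < j <= t -> del_occ a j (nseq t a) = nseq t.-1 a.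
Proof.
elim: t j => [|t IH] j H /=; first lia.
case: a IH => IH /=; case: eqP => [_//|Hj]; rewrite IH; try lia;
  (case: t IH H Hj => [|t] IH H Hj; [lia|by []]).
Qed.

Lemma pdel_block j b t : 0 < j <= t -> pdel j (block b t) = block b t.-1.
Proof.
move=> H; rewrite /pdel /block; case: b => /=.
  rewrite del_cat cnt_nseq /= mul1n.
  have -> : j <= t by lia.
  rewrite del_nseq // del_cat cnt_nseq /= mul0n.
  have -> : (j <= 0) = false by lia.
  by rewrite subn0 del_nseq.
rewrite del_cat cnt_nseq /= mul0n.
have -> : (j <= 0) = false by lia.
rewrite subn0 del_nseq // del_cat cnt_nseq /= mul1n.
have -> : j <= t by lia.
by rewrite del_nseq.
Qed.

Lemma pdel_block_cat j b t X : 0 < j ->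
  pdel j (block b t ++ X) = if j <= t then block b t.-1 ++ X else block b t ++ pdel (j - t) X.
Proof.
move=> Hj; case: ifP => H.
  by rewrite pdel_catl ?cnt_block // pdel_block ?Hj.
by rewrite pdel_catr ?cnt_block //; lia.
Qed.

Definition blocks (bs : seq (bool * nat)) := flatten [seq block bt.1 bt.2 | bt <- bs].
Definition pos (bt : bool * nat) := 0 < bt.2.

Lemma blocks_cons bt bs : blocks (bt :: bs) = block bt.1 bt.2 ++ blocks bs.
Proof. by []. Qed.

Lemma blocks_cat bs1 bs2 : blocks (bs1 ++ bs2) = blocks bs1 ++ blocks bs2.
Proof. by rewrite /blocks map_cat flatten_cat. Qed.

Lemma blocks_filter bs : blocks (filter pos bs) = blocks bs.
Proof.
elim: bs => //= [[b t]] bs IH; rewrite /pos /=; case: t => [|t] /=; rewrite blocks_cons ?IH //.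
Qed.

Lemma cnt_blocks c bs : cnt c (blocks bs) = sumn (map snd bs).
Proof. elim: bs => [|[b t] bs IH] //=; by rewrite blocks_cons cnt_cat cnt_block IH. Qed.

Lemma decomp_blocks bs : all pos bs -> decomp (blocks bs) (map snd bs).
Proof. by move=> H; exists bs. Qed.

Lemma coll_blocks bs : collectable (blocks bs).
Proof.
exists (map snd (filter pos bs)); rewrite -blocks_filter; apply: decomp_blocks.
by rewrite all_filter; apply/allP => x _; apply/implyP.
Qed.

Lemma collE w : collectable w <-> exists2 bs, all pos bs & blocks bs = w.
Proof.
split; first by case=> l [bs [H1 H2 _]]; exists bs.
by case=> bs _ <-; apply: coll_blocks.
Qed.

Lemma nseq_run b t t' Z Z' : nseq t b ++ (~~ b) :: Z = nseq t' b ++ (~~ b) :: Z' -> t = t' /\ Z = Z'.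
Proof.
elim: t t' => [|t IH] [|t'] /=.
- by case.
- by try clear IH; case; case: b.
- by try clear IH; case; case: b.
- by case=> /IH [-> ->].
Qed.

Lemma block_inj b t b' t' X Y : 0 < t -> 0 < t' ->
  block b t ++ X = block b' t' ++ Y -> b = b' /\ t = t' /\ X = Y.
Proof.
case: t => // t; case: t' => // t' _ _ /= [Hb]; subst b'.
rewrite /block -!catA /= => /nseq_run [Ht HZ]; subst t'; split=> //; split=> //.
by move: HZ => /= /cat_cancel.
Qed.

Lemma blocks_prefix bs1 bs R : all pos bs1 -> all pos bs -> blocks bs1 ++ R = blocks bs ->
  exists2 bs2, bs = bs1 ++ bs2 & blocks bs2 = R.
Proof.
elim: bs1 bs => [|[b t] bs1 IH] bs; first by move=> _ _ E; exists bs.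
case: bs => [|[b' t'] bs] /= /andP [Ht H1] //.
  rewrite /blocks /= /block; case: t Ht => // t _; by case: b.
move=> /andP [Ht' H] ; rewrite !blocks_cons /= -catA => /block_inj.
move=> /(_ Ht Ht') [<- [<- E]]; have [bs2 -> <-] := IH _ H1 H E; by exists bs2.
Qed.

Lemma blocks_inj bs1 bs2 : all pos bs1 -> all pos bs2 -> blocks bs1 = blocks bs2 -> bs1 = bs2.
Proof.
move=> H1 H2 E; have [bs3 E2 E3] : exists2 bs3, bs2 = bs1 ++ bs3 & blocks bs3 = [::].
  by apply: blocks_prefix => //; rewrite cats0.
subst bs2; clear E; case: bs3 E3 H2 => [|[b t] bs3]; first by rewrite cats0.
rewrite blocks_cons all_cat /= => + /andP [_ /andP [Ht _]].
by case: t Ht => // t _; case: b.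
Qed.

Lemma decomp_uniq w l1 l2 : decomp w l1 -> decomp w l2 -> l1 = l2.
Proof.
case=> bs1 [H1 E1 <-] [bs2 [H2 E2 <-]].
by rewrite (@blocks_inj bs1 bs2) //; rewrite /blocks E1 E2.
Qed.

Definition bal w := cnt true w = cnt false w.
Definition irred E := [/\ E <> [::], bal E & forall u v, E = u ++ v -> bal u -> u = [::] \/ v = [::]].

Lemma del_cons a j x w : del_occ a j (x :: w) =
  if x == a then (if j == 1 then w else x :: del_occ a j.-1 w) else x :: del_occ a j w.
Proof. by []. Qed.

Lemma size_block b t : size (block b t) = t + t.
Proof. by rewrite /block size_cat !size_nseq. Qed.

Lemma block_irred b t : 0 < t -> irred (block b t).
Proof.
move=> Ht; split.
- by case: t Ht.
- by rewrite /bal !cnt_block.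
move=> u v E Hu.
have Hs : size u + size v = t + t by rewrite -size_cat -E size_block.
have Hu' : u = take (size u) (block b t) by rewrite E take_size_cat.
move: Hu'; rewrite /block take_cat size_nseq; case: ifP => Hlt Hu'.
  left; move: Hu; rewrite /bal Hu' take_nseq ?(ltnW Hlt) // !cnt_nseq.
  clear E Hu'; case: b => /= H; rewrite ?mul1n ?mul0n in H; (have -> : size u = 0 by lia); by [].
have {}Hlt : t <= size u by rewrite leqNgt Hlt.
right; move: Hu; rewrite /bal Hu' take_nseq ?cnt_cat ?cnt_nseq; last lia.
clear E Hu'; case: b => /= H; rewrite ?mul1n ?mul0n in H; move: Hs; case: v => //= x v' Hs; exfalso; lia.
Qed.

Lemma bal_cat u v : bal u -> bal v -> bal (u ++ v).
Proof. by rewrite /bal !cnt_cat => -> ->. Qed.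

Lemma bal_catr u v : bal (u ++ v) -> bal u -> bal v.
Proof. rewrite /bal !cnt_cat; lia. Qed.

Lemma excursion Q : bal Q -> Q <> [::] ->
  exists E R, [/\ Q = E ++ R, irred E & bal R].
Proof.
elim: {Q}(size Q).+1 {-2}Q (ltnSn (size Q)) => // n IH Q Hs HQ Hne.
case: (classic (irred Q)) => Hirr.
  by exists Q, [::]; split; rewrite ?cats0.
have [u [v [E Hu Hune Hvne]]] : exists u v, [/\ Q = u ++ v, bal u, u <> [::] & v <> [::]].
  apply: NNPP => H; apply: Hirr; split=> // u v E Hu; apply: NNPP => H'.
  apply: H; exists u, v; split=> //; move=> Hx; apply: H'; [left|right]; done.
have Hsu : size u < n.
  move: Hs; rewrite E size_cat; case: v Hvne {E} => //= x v _; lia.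
have [E1 [R [E1u HE1 HR]]] := IH u Hsu Hu Hune.
exists E1, (R ++ v); split=> //; first by rewrite E E1u catA.
apply: bal_cat => //; apply: (@bal_catr u) => //; by rewrite -E.
Qed.

Lemma irred_prefix_aux E1 E2 X1 X2 : irred E2 -> E1 <> [::] -> bal E1 ->
  size E1 <= size E2 -> E1 ++ X1 = E2 ++ X2 -> E1 = E2.
Proof.
case=> _ _ H2 Hne Hb Hs E.
have : E2 = E1 ++ take (size E2 - size E1) X1.
  have H : take (size E2) (E1 ++ X1) = E2 by rewrite E take_size_cat.
  rewrite -{1}H take_cat.
  by have -> : (size E2 < size E1) = false by lia.
move=> E2E; have := H2 _ _ E2E Hb; case=> [//|HZ]; by rewrite E2E HZ cats0.
Qed.

Lemma irred_prefix E1 E2 X1 X2 : irred E1 -> irred E2 -> E1 ++ X1 = E2 ++ X2 -> E1 = E2.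
Proof.
move=> H1 H2 E; case: (H1) => N1 B1 _; case: (H2) => N2 B2 _.
case: (leqP (size E1) (size E2)) => Hs.
  exact: (irred_prefix_aux H2 N1 B1 Hs E).
apply/esym; apply: (irred_prefix_aux H1 N2 B2 _ (esym E)); lia.
Qed.

Lemma NC1 E X : irred E -> (forall b t, 0 < t -> E <> block b t) -> ~ collectable (E ++ X).
Proof.
move=> HE Hnb /collE [[|[b t] bs]] /=.
  move=> _ E0; case: HE => HE _ _; apply: HE; move: E0; rewrite /blocks /=; clear Hnb; by case: E.
move=> /andP [Ht _]; rewrite blocks_cons => /irred_prefix.
move=> /(_ (block_irred b Ht) HE) E'; exact: (Hnb b t Ht (esym E')).
Qed.

Lemma liftL a j w u' v' : del_occ a j w = u' ++ v' -> j <= cnt a u' ->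
  exists u, w = u ++ v' /\ del_occ a j u = u'.
Proof.
elim: u' w j => [|y u IH] w j.
  rewrite /cnt /= leqn0 => + /eqP Hj; subst j; rewrite del0 => ->; by exists [::].
case: w => [//|x w1]; rewrite del_cons cnt_cons.
case: (x =P a) => [Hx|Hx].
  case: (j =P 1) => [Hj|Hj].
    move=> E _; exists (x :: y :: u); by rewrite E del_cons Hx eqxx Hj.
  case=> Hxy E; subst y; rewrite Hx eqxx => Hc.
  have [u1 [-> Hu1]] := IH _ _ E ltac:(lia).
  exists (x :: u1); by rewrite del_cons Hx eqxx Hu1; move/eqP/negbTE: Hj => ->.
case=> Hxy E; subst y; move/eqP/negbTE: Hx => Hx; rewrite Hx add0n => Hc.
have [u1 [-> Hu1]] := IH _ _ E Hc.
by exists (x :: u1); rewrite del_cons Hx Hu1.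
Qed.

Lemma liftR a j w u' v' : del_occ a j w = u' ++ v' -> (cnt a u').+1 < j ->
  exists v, w = u' ++ v /\ del_occ a (j - cnt a u') v = v'.
Proof.
elim: u' w j => [|y u IH] w j.
  by move=> E _; exists w; rewrite /cnt /= subn0.
case: w => [//|x w1]; rewrite del_cons cnt_cons.
case: (x =P a) => [Hx|Hx].
  case: (j =P 1) => [Hj|Hj]; first by move=> _; lia.
  case=> Hxy E; subst y; rewrite Hx eqxx => Hc.
  have [v1 [-> Hv1]] := IH _ _ E ltac:(lia).
  exists v1; split=> //; rewrite -Hv1; congr del_occ; lia.
case=> Hxy E; subst y; move/eqP/negbTE: Hx => Hx; rewrite Hx add0n => Hc.
have [v1 [-> Hv1]] := IH _ _ E Hc.
by exists v1.
Qed.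

Lemma pliftL j w u' v' : 0 < j -> pdel j w = u' ++ v' -> j <= cnt true u' -> j <= cnt false u' ->
  exists u, [/\ w = u ++ v', cnt true u = (cnt true u').+1 & cnt false u = (cnt false u').+1].
Proof.
move=> Hj E H1 H2.
have [u1 [E1 Hu1]] := liftL E H2.
have H1' : j <= cnt true u1 by rewrite -Hu1 cnt_del_other in H1.
have [u2 [E2 Hu2]] := liftL E1 H1'.
exists u2; split=> //.
  move: H1; rewrite -Hu1 cnt_del_other // -Hu2 cnt_del_same; ifs.
move: H2; rewrite -Hu1 cnt_del_same -Hu2 cnt_del_other //; ifs.
Qed.

Lemma pliftR j w u' v' : pdel j w = u' ++ v' -> (cnt true u').+1 < j -> (cnt false u').+1 < j ->
  exists v, w = u' ++ v.
Proof.
move=> E H1 H2.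
have [v1 [E1 _]] := liftR E H2.
have [v2 [E2 _]] := liftR E1 H1.
by exists v2.
Qed.

Lemma pattern_facts r P : is_pattern r P ->
  [/\ cnt true P = r, cnt false P = r & exists P1, P = true :: P1].
Proof.
case=> Hs Hc Hh.
have Ht : cnt true P = r by rewrite -Hc /cnt; apply: eq_count => x; case: x.
split=> //.
  have := cnt_tf P; rewrite Hs Ht => H; lia.
by case: P Hs Hc Hh {Ht} => //= x P _ _ ->; exists P.
Qed.

Lemma pdel0 w : pdel 0 w = w.
Proof. by rewrite /pdel !del0. Qed.

Lemma coll_pdel j P : collectable P -> collectable (pdel j P).
Proof.
move=> /collE [bs _ <-].
suff [bs' ->] : exists bs', pdel j (blocks bs) = blocks bs' by apply: coll_blocks.
elim: bs j => [|[b t] bs IH] j.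
  by exists [::]; case: j => [|j]; rewrite ?pdel0 // /pdel /= /blocks /=.
case: j => [|j]; first by exists ((b, t) :: bs); rewrite pdel0.
rewrite blocks_cons pdel_block_cat //=; case: ifP => _.
  by exists ((b, t.-1) :: bs).
have [bs' ->] := IH (j.+1 - t); by exists ((b, t) :: bs').
Qed.

Lemma mismatch1 P Q : collectable P -> ~ collectable Q -> mismatch P Q.
Proof. by move=> H1 H2; left. Qed.

Lemma mismatch_sym P Q : mismatch P Q -> mismatch Q P.
Proof.
case=> [[H1 H2]|[[H1 H2]|[H1 [H2 H3]]]].
- by right; left.
- by left.
right; right; split=> // ; split=> // lP lQ HP HQ E; apply: (H3 lQ lP HQ HP); by rewrite E.
Qed.

Lemma mismatch3 P Q l1 l2 : decomp P l1 -> decomp Q l2 -> l1 <> l2 -> mismatch P Q.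
Proof.
move=> H1 H2 N; right; right; split; first by exists l1.
split; first by exists l2.
by move=> lP lQ HP HQ; rewrite (decomp_uniq HP H1) (decomp_uniq HQ H2).
Qed.

Definition D1 (l : seq nat) := if l is x :: l' then filter (fun y => 0 < y) (x.-1 :: l') else [::].
Definition Dr (l : seq nat) := rev (D1 (rev l)).

Lemma D1_cons x l : D1 (x :: l) = filter (fun y => 0 < y) (x.-1 :: l).
Proof. by []. Qed.

Lemma map_snd_filter bs : map snd (filter pos bs) = filter (fun y => 0 < y) (map snd bs).
Proof. by rewrite filter_map. Qed.

Lemma all_pos_map bs : all pos bs = all (fun y => 0 < y) (map snd bs).
Proof. by rewrite all_map. Qed.

Lemma decomp_filter bs : decomp (blocks bs) (filter (fun y => 0 < y) (map snd bs)).
Proof.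
rewrite -blocks_filter -map_snd_filter; apply: decomp_blocks; exact: filter_all.
Qed.

Lemma decompD1 b t bs : 0 < t -> decomp (pdel 1 (blocks ((b, t) :: bs))) (D1 (map snd ((b, t) :: bs))).
Proof.
move=> Ht; rewrite blocks_cons pdel_block_cat // Ht.
by have := decomp_filter ((b, t.-1) :: bs).
Qed.

Lemma pdel_last bs0 b t : all pos bs0 -> 0 < t ->
  pdel (sumn (map snd bs0) + t) (blocks (rcons bs0 (b, t))) = blocks (rcons bs0 (b, t.-1)).
Proof.
move=> H0 Ht; elim: bs0 H0 => [|[b0 t0] bs0 IH] /=.
  by move=> _; rewrite add0n blocks_cons pdel_block_cat // leqnn.
move=> /andP [Ht0 H0]; rewrite !blocks_cons pdel_block_cat; last lia.
rewrite /=; have -> : (t0 + sumn (map snd bs0) + t <= t0) = false by lia.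
by rewrite -IH //; congr (_ ++ pdel _ _); lia.
Qed.

Lemma decompDr bs : all pos bs -> bs <> [::] ->
  decomp (pdel (sumn (map snd bs)) (blocks bs)) (Dr (map snd bs)).
Proof.
case/lastP: bs => [//|bs0 [b t]] H _.
move: H; rewrite all_rcons => /andP [Ht H0].
rewrite map_rcons sumn_rcons pdel_last //.
have -> : Dr (rcons (map snd bs0) t) = filter (fun y => 0 < y) (map snd (rcons bs0 (b, t.-1))).
  by rewrite /Dr rev_rcons D1_cons -filter_rev rev_cons revK map_rcons.
exact: decomp_filter.
Qed.

Lemma D1_pos x l : 0 < x -> all (fun y => 0 < y) l -> D1 (x :: l) = if x == 1 then l else x.-1 :: l.
Proof.
move=> Hx Hl; rewrite /D1 /=; case: (x =P 1) => [->|Hx1] /=; first by apply/all_filterP.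
have -> : 0 < x.-1 by lia.
by congr (_ :: _); apply/all_filterP.
Qed.

Lemma Dr_cons a l : 0 < a -> l <> [::] -> Dr (a :: l) = a :: Dr l.
Proof.
move=> Ha; rewrite /Dr rev_cons.
case E : (rev l) => [|z zs]; first by move=> Hl; exfalso; apply: Hl; rewrite -[l]revK E.
move=> _; rewrite rcons_cons !D1_cons -cats1 -cat_cons filter_cat rev_cat /= Ha.
by [].
Qed.

Lemma comb_aux y l m : 1 < y -> all (fun z => 0 < z) m -> 3 <= sumn (y :: m) ->
  l = y.-1 :: m -> Dr (1 :: l) <> Dr (y :: m).
Proof.
move=> Hy Hm Hs ->; rewrite Dr_cons //.
case: m Hm Hs => [|z m] Hm Hs.
  rewrite /Dr /= ; have -> : 0 < y.-1 by lia.
  rewrite (_ : rev [:: y.-1] = [:: y.-1]) // => -[E]; move: Hs => /=; lia.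
have Hy0 : 0 < y by lia.
by rewrite [Dr (y :: _)]Dr_cons // => -[E _]; lia.
Qed.

Lemma comb l m : all (fun y => 0 < y) l -> all (fun y => 0 < y) m ->
  sumn l = sumn m -> 3 <= sumn l -> D1 l = D1 m -> Dr l = Dr m -> l = m.
Proof.
move=> Hl Hm Hsum Hs; case: l Hl Hsum Hs => [|x l] Hl Hsum Hs; first by move: Hs.
case: m Hm Hsum => [|y m] Hm Hsum; first by move: Hs; rewrite Hsum.
move: Hl Hm => /andP [Hx Hl] /andP [Hy Hm].
rewrite (D1_pos Hx Hl) (D1_pos Hy Hm).
case: (x =P 1) => [Ex|Ex]; case: (y =P 1) => [Ey|Ey].
- by move=> -> _; rewrite Ex Ey.
- subst x; move=> Hl' HD; exfalso; apply: (comb_aux _ Hm _ Hl' HD); lia.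
- subst y; move=> Hl' HD; exfalso; apply: (comb_aux _ Hl _ (esym Hl') (esym HD)); lia.
- case=> Exy -> _; congr (_ :: _); lia.
Qed.

Lemma blocks_nil : blocks [::] = [::].
Proof. by []. Qed.

Arguments blocks : simpl never.

Lemma decompD1' bs : all pos bs -> bs <> [::] -> decomp (pdel 1 (blocks bs)) (D1 (map snd bs)).
Proof. case: bs => [//|[b t] bs] /= /andP [Ht _] _; exact: decompD1. Qed.

Lemma caseA r P Q lP lQ : 3 <= r -> is_pattern r P -> is_pattern r Q ->
  decomp P lP -> decomp Q lQ -> lP <> lQ ->
  exists2 j, 1 <= j <= r & mismatch (pdel j P) (pdel j Q).
Proof.
move=> Hr HPp HQp [bsP [HP EP ElP]] [bsQ [HQ EQ ElQ]] Hne.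
have [HPt _ _] := pattern_facts HPp.
have [HQt _ _] := pattern_facts HQp.
move: HPt HQt; rewrite -EP -EQ !cnt_blocks => HPt HQt.
have HPne : bsP <> [::] by move=> E; move: HPt; rewrite E /=; lia.
have HQne : bsQ <> [::] by move=> E; move: HQt; rewrite E /=; lia.
case: (classic (D1 lP = D1 lQ)) => H1; last first.
  exists 1; first by apply/andP; split; lia.
  apply: (mismatch3 (decompD1' HP HPne) (decompD1' HQ HQne)).
  by rewrite ElP ElQ.
case: (classic (Dr lP = Dr lQ)) => H2.
  exfalso; apply: Hne; apply: comb => //.
  - by rewrite -ElP -all_pos_map.
  - by rewrite -ElQ -all_pos_map.
  - by rewrite -ElP -ElQ HPt HQt.
  - by rewrite -ElP HPt.
exists r; first by apply/andP; split; lia.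
have D1' := decompDr HP HPne; have D2' := decompDr HQ HQne.
rewrite HPt in D1'; rewrite HQt in D2'.
apply: (mismatch3 D1' D2'); by rewrite ElP ElQ.
Qed.

Lemma L0 w b : del_occ false 1 w = nseq b false -> 0 < cnt false w -> w = nseq b.+1 false.
Proof.
elim: w b => [|x w IH] b; first by rewrite /cnt.
case: x => /=; first by case: b.
by move=> ->.
Qed.

Lemma L1 a b w : del_occ false 2 w = nseq a true ++ nseq b false -> 1 < cnt false w ->
  w = nseq a true ++ nseq b.+1 false.
Proof.
elim: a w => [|a IH] [|x w].
- by rewrite /cnt.
- case: x => /=; first by case: b.
  case: b => [|b] //= [E] Hc.
  have Hw : 0 < cnt false w by move: Hc; rewrite cnt_cons /=; lia.
  by rewrite (L0 E Hw).
- by [].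
- case: x => //= [[E]] Hc; rewrite (IH _ E) //.
Qed.

Lemma recon r Q1 c : 3 <= r -> cnt false Q1 = r ->
  pdel 2 (true :: Q1) = block c r.-1 ++ [::] -> true :: Q1 = block true r.
Proof.
move=> Hr; have [k ->] : exists k, r = k.+3 by exists (r - 3); lia.
case: Q1 => [|x Q2]; first by rewrite /cnt.
rewrite cnt_cons /pdel /=; case: x => /= Hc.
  move=> [Ec E]; subst c; move: E; rewrite cats0 => E.
  change (del_occ false 2 Q2 = nseq k.+1 true ++ nseq k.+2 false) in E.
  have -> := L1 E ltac:(lia); by [].
by case=> <-.
Qed.

Lemma block_nonnil b t X : 0 < t -> block b t ++ X <> [::].
Proof. by case: t. Qed.

Lemma QL1 Q lQ : irred Q -> decomp (pdel 1 Q) lQ -> size lQ <= 1.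
Proof.
move=> [HQne HQb HQi] [bs [Hpos Ebs <-]]; rewrite size_map.
case: bs Hpos Ebs => [|[c s] [|[c2 s2] bs3]] //= /andP [Hs /andP [Hs2 _]] E.
exfalso.
have [u [EQ Hut Huf]] := pliftL (ltn0Sn 0) (esym E) ltac:(rewrite cnt_block; exact: Hs)
  ltac:(rewrite cnt_block; exact: Hs).
have Hb : bal u by rewrite /bal Hut Huf !cnt_block.
case: (HQi _ _ EQ Hb) => Hu.
  by move: Hut; rewrite Hu /cnt.
by move: Hu; apply: block_nonnil.
Qed.

Lemma QLr r Q lQ : 0 < r -> irred Q -> cnt true Q = r -> decomp (pdel r Q) lQ -> size lQ <= 1.
Proof.
move=> Hr [HQne HQb HQi] HQt [bs [Hpos Ebs <-]]; rewrite size_map.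
case: bs Hpos Ebs => [|[c s] [|[c2 s2] bs3]] //= /andP [Hs /andP [Hs2 _]] E.
exfalso.
have Hc : cnt true (pdel r Q) = r.-1.
  rewrite /pdel cnt_del_other // cnt_del_same HQt; ifs.
move: Hc; rewrite -E cnt_cat cnt_block cnt_cat cnt_block => Hc.
have [v EQ] := pliftR (esym E) ltac:(rewrite cnt_block; lia) ltac:(rewrite cnt_block; lia).
case: (HQi _ _ EQ ltac:(by rewrite /bal !cnt_block)) => Hv.
  by move: Hv; case: s Hs {E Hc EQ}.
by move: HQt; rewrite EQ Hv cats0 cnt_block; lia.
Qed.

Lemma collQ' j P Q : collectable P ->
  (collectable (pdel j Q) -> forall lP lQ, decomp (pdel j P) lP -> decomp (pdel j Q) lQ -> lP <> lQ) ->
  mismatch (pdel j P) (pdel j Q).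
Proof.
move=> HP H; case: (classic (collectable (pdel j Q))) => HQ'.
  right; right; split; first exact: coll_pdel.
  by split=> //; apply: H.
by apply: mismatch1 => //; apply: coll_pdel.
Qed.

Lemma caseB r P Q : 3 <= r -> is_pattern r P -> is_pattern r Q ->
  collectable P -> ~ collectable Q ->
  exists2 j, 1 <= j <= r & mismatch (pdel j P) (pdel j Q).
Proof.
move=> Hr HPp HQp HP HQ.
have [HPt HPf [P1 EP1]] := pattern_facts HPp.
have [HQt HQf [Q1 EQ1]] := pattern_facts HQp.
have [E [R [EQ HE HR]]] : exists E R, [/\ Q = E ++ R, irred E & bal R].
  by apply: excursion; [rewrite /bal HQt HQf | rewrite EQ1].
case: (classic (R = [::])) => HR0; last first.
  have HRc : 0 < cnt true R.
    move: HR HR0; rewrite /bal; have := cnt_tf R; case: R {EQ} => // x R' H1 H2 _; move: H1; rewrite H2 /= => H1; clear -H1; lia.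
  case: (classic (exists b t, 0 < t /\ E = block b t)) => [[b [t [Ht EE]]]|Hnb].
    have HRnc : ~ collectable R.
      move=> /collE [bsR HbsR ER]; apply: HQ; apply/collE; exists ((b, t) :: bsR).
        by rewrite /= HbsR andbT.
      by rewrite blocks_cons EQ EE ER.
    exists 1; first by apply/andP; split; lia.
    apply: mismatch1; first exact: coll_pdel.
    rewrite EQ EE pdel_block_cat // Ht.
    move=> /collE [bs' Hbs' E'].
    have Hpre : blocks (filter pos [:: (b, t.-1)]) ++ R = blocks bs'.
      by rewrite blocks_filter blocks_cons blocks_nil cats0 E'.
    have [bs2 Ebs ER] := blocks_prefix (filter_all _ _) Hbs' Hpre.
    apply: HRnc; apply/collE; exists bs2 => //.
    by move: Hbs'; rewrite Ebs all_cat => /andP [].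
  have HEb : bal E by case: HE.
  have Hk : cnt true E < r by move: HQt; rewrite EQ cnt_cat; lia.
  exists r; first by apply/andP; split; lia.
  apply: mismatch1; first exact: coll_pdel.
  rewrite EQ pdel_catr //; last by rewrite -HEb.
  apply: NC1 => // b t Ht EE; apply: Hnb; by exists b, t.
subst R; rewrite cats0 in EQ; subst E.
have [bs HbsP EP] := (iffLR (collE P)) HP.
case: bs HbsP EP => [|[b t] [|[b2 t2] bs'']] Hpos EP.
- by move: EP; rewrite EP1 blocks_nil.
- have Ht : t = r by move: HPt; rewrite -EP cnt_blocks /= addn0.
  subst t.
  exists 2; first by apply/andP; split; lia.
  have EP' : pdel 2 P = blocks [:: (b, r.-1)].
    have H2r : 2 <= r by lia.
    by rewrite -EP blocks_cons blocks_nil pdel_block_cat // H2r blocks_cons blocks_nil.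
  apply: collQ' => // _ lP lQ HlP HlQ Eq.
  have ElP : lP = [:: r.-1].
    apply: (decomp_uniq HlP); rewrite EP'; apply: (@decomp_blocks [:: (b, r.-1)]).
    by rewrite /= /pos /= andbT; lia.
  subst lP lQ.
  case: HlQ => bsQ [HposQ EbsQ EmQ].
  case: bsQ HposQ EbsQ EmQ => [|[c s] [|x y]] //= _ EbsQ [Es]; subst s.
  apply: HQ; rewrite EQ1 (@recon r Q1 c) //.
    by have := coll_blocks [:: (true, r)]; rewrite blocks_cons blocks_nil cats0.
  - by move: HQf; rewrite EQ1 cnt_cons.
  - by rewrite -EQ1 -EbsQ.
- have Hr0 : 0 < r by lia.
  move: Hpos => /= /andP [Ht /andP [Ht2 Hpos]]; rewrite /pos /= in Ht Ht2.
  have [j [Hj [bsP' [HposP' HszP' EP']]]] : exists j, (j = 1 \/ j = r) /\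
      exists bsP', [/\ all pos bsP', 1 < size bsP' & blocks bsP' = pdel j P].
    case: (ltnP 1 t) => Ht1.
      exists 1; split; first by left.
      exists ((b, t.-1) :: (b2, t2) :: bs''); split => //.
        by rewrite /= /pos /= Ht2 Hpos !andbT; lia.
      by rewrite -EP blocks_cons pdel_block_cat // (ltnW Ht1).
    have Ht1' : t = 1 by lia.
    subst t; case: bs'' Hpos EP => [|bt bs3] Hpos EP.
      have Ht2r : t2 = r.-1 by move: HPt; rewrite -EP cnt_blocks /=; lia.
      exists r; split; first by right.
      exists [:: (b, 1); (b2, t2.-1)]; split => //.
        by rewrite /= /pos /=; lia.
      have F1 : (r <= 1) = false by lia.
      have F2 : r - 1 <= t2 by lia.
      have F3 : 0 < r - 1 by lia.
      rewrite -EP blocks_cons pdel_block_cat // F1 /= pdel_block_cat; last lia.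
      by rewrite F2 blocks_cons blocks_nil.
    exists 1; split; first by left.
    exists ((b2, t2) :: bt :: bs3); split => //.
      by rewrite /= /pos /= Ht2.
    by rewrite -EP blocks_cons pdel_block_cat.
  exists j; first by case: Hj => ->; apply/andP; split; lia.
  apply: collQ' => // _ lP lQ HlP HlQ Eq.
  have ElP : lP = map snd bsP' by apply: (decomp_uniq HlP); rewrite -EP'; exact: decomp_blocks.
  have : size lQ <= 1.
    case: Hj => Hj; subst j; first exact: QL1 HlQ.
    exact: QLr Hr0 HE HQt HlQ.
  by rewrite -Eq ElP size_map; lia.
Qed.

Theorem mainTheorem8 (r : nat) (P Q : seq bool) :
  3 <= r -> is_pattern r P -> is_pattern r Q -> mismatch P Q ->
  exists2 j, 1 <= j <= r & mismatch (pdel j P) (pdel j Q).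
Proof.
move=> Hr HP HQ [[H1 H2]|[[H1 H2]|[H1 [H2 H3]]]].
- exact: caseB.
- have [j Hj Hm] := caseB Hr HQ HP H2 H1.
  by exists j => //; apply: mismatch_sym.
- case: H1 => lP HlP; case: H2 => lQ HlQ.
  by apply: (caseA Hr HP HQ HlP HlQ); apply: H3.
Qed.
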